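(* Let $n\neq 0,-1$ be an integer and $M$ the graph manifold obtained by $4$-surgery along the $n$-twist knot $K_n$, decomposed along an incompressible torus as $M=E_{T(2,2n+1)}\cup N(Kb)$. Then for every irreducible representation $\bar\rho:\pi_1(M)\to SL(2,\mathbb{C})$, the restriction of $\bar\rho$ to $\pi_1(E_{T(2,2n+1)})$ is abelian.
   Context: The $n$-twist knot $K_n$ is the two-bridge knot whose group has the presentation $\pi_1(E_{K_n})=\langle \alpha,\beta\mid \omega^n\alpha=\beta\omega^n\rangle$ with $\alpha,\beta$ meridians and $\omega=\beta\alpha^{-1}\beta^{-1}\alpha$; its Alexander polynomial is $-nt^2+(2n+1)t-n$, and $K_1$ is the figure-eight knot. $E_K$ denotes a knot exterior, $T(2,2n+1)$ the torus knot of type $(2,2n+1)$, and $N(Kb)$ the twisted $I$-bundle over the Klein bottle. The manifold $M$ obtained by $4$-surgery along $K_n$ is the union of $E_{T(2,2n+1)}$ and $N(Kb)$ along a torus, with $\pi_1(M)=\langle a,b,x,y\mid a^2=b^{2n+1},\ x^{-1}yx=y^{-1},\ \mu=y^{-1},\ h=y^{-1}x^2\rangle$, where $\pi_1(E_{T(2,2n+1)})=\langle a,b\mid a^2=b^{2n+1}\rangle$, $\pi_1(N(Kb))=\langle x,y\mid x^{-1}yx=y^{-1}\rangle$, $\mu=b^{-n}a$ is a meridian and $h$ a regular fiber of the torus knot exterior. A representation is irreducible if the only subspaces of $\mathbb{C}^2$ invariant under its image are $\{0\}$ and $\mathbb{C}^2$; abelian if its image is abelian. *)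

(* Defs.v *)
From mathcomp Require Import all_boot all_order all_algebra.
From mathcomp Require Import complex Rstruct.
From Stdlib Require Import Reals.
Set Implicit Arguments. Unset Strict Implicit. Unset Printing Implicit Defensive.
Import GRing.Theory Num.Theory.
Local Open Scope ring_scope.

Definition CC : fieldType := (Rdefinitions.R)[i].

Inductive generated {F : fieldType} (S : seq 'M[F]_2) : 'M[F]_2 -> Prop :=
| gen_one : generated S 1
| gen_in g : g \in S -> generated S g
| gen_inv g : generated S g -> generated S g^-1
| gen_mul g h : generated S g -> generated S h -> generated S (g * h).

(* Irreducibility: the only subspaces of F^2 (column vectors, acted on by
   v |-> g v) invariant under every element of the image are {0} and F^2.
   A subspace is represented as the row space of U; g maps it to the row
   space of U *m g^T. *)
Definition irreducible_image {F : fieldType} (S : seq 'M[F]_2) : Prop :=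
  forall U : 'M[F]_2,
    (forall g, generated S g -> (U *m g^T <= U)%MS) ->
    (U == (0 : 'M[F]_2))%MS \/ (U == (1%:M : 'M[F]_2))%MS.

Definition abelian_image {F : fieldType} (S : seq 'M[F]_2) : Prop :=
  forall g h, generated S g -> generated S h -> g * h = h * g.

(* A representation rho : pi_1(M) -> SL(2,C) of
   <a,b,x,y | a^2 = b^(2n+1), x^-1 y x = y^-1, mu = y^-1, h = y^-1 x^2>
   with mu = b^-n a and h = a^2, given by the images A,B,X,Y of a,b,x,y. *)
Definition rep_M (n : int) (A B X Y : 'M[CC]_2) : Prop :=
  [/\ \det A = 1, \det B = 1, \det X = 1 & \det Y = 1] /\
  [/\ A ^+ 2 = B ^ (2 * n + 1),
      X^-1 * Y * X = Y^-1,
      B ^ (- n) * A = Y^-1 &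
      A ^+ 2 = Y^-1 * X ^+ 2].

(* Main.v *)
Require Import Defs.
From mathcomp Require Import all_boot all_order all_algebra.
From mathcomp Require Import complex Rstruct.
From mathcomp Require Import ring.
Import GRing.Theory Num.Theory.
Local Open Scope ring_scope.
Set Implicit Arguments. Unset Strict Implicit.
Ltac lin e := let t := type of e in match t with ?a = ?b =>
  apply/eqP; rewrite -subr_eq0; apply/eqP;
  first [ (transitivity (a - b); [ring | by rewrite e subrr])
        | (transitivity (b - a); [ring | by rewrite e subrr]) ] end.
Lemma mul2E (F : ringType) (P Q : 'M[F]_2) i j : (P * Q) i j = P i 0 * Q 0 j + P i 1 * Q 1 j.
Proof.
rewrite -mulmxE mxE !big_ord_recr big_ord0 /= add0r.
have -> : widen_ord (leqnSn 1) ord_max = 0 :> 'I_2 by apply/val_inj.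
have -> : ord_max = 1 :> 'I_2 by apply/val_inj.
done.
Qed.
Lemma mx2P (F : ringType) (P Q : 'M[F]_2) : P 0 0 = Q 0 0 -> P 0 1 = Q 0 1 -> P 1 0 = Q 1 0 -> P 1 1 = Q 1 1 -> P = Q.
Proof.
move=> h1 h2 h3 h4; apply/matrixP => i j.
have [->|->] : i = 0 \/ i = 1 by case: i => -[|[|//]] ? ; [left|right]; apply/val_inj.
all: have [->|->] : j = 0 \/ j = 1 by case: j => -[|[|//]] ? ; [left|right]; apply/val_inj.
all: done.
Qed.
Lemma par (R : fieldType) (u1 u2 u3 v1 v2 v3 w1 w2 w3 : R) :
 [|| v1 != 0, v2 != 0 | v3 != 0] ->
 u1*v2 = u2*v1 -> u1*v3 = u3*v1 -> u2*v3 = u3*v2 ->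
 w1*v2 = w2*v1 -> w1*v3 = w3*v1 -> w2*v3 = w3*v2 ->
 [/\ u1*w2 = u2*w1, u1*w3 = u3*w1 & u2*w3 = u3*w2].
Proof.
move=> /or3P [] hv hu12 hu13 hu23 hw12 hw13 hw23.
- have eu2 : u2 = u1*v2/v1 by rewrite hu12 mulfK.
  have eu3 : u3 = u1*v3/v1 by rewrite hu13 mulfK.
  have ew2 : w2 = w1*v2/v1 by rewrite hw12 mulfK.
  have ew3 : w3 = w1*v3/v1 by rewrite hw13 mulfK.
  rewrite eu2 eu3 ew2 ew3; split; field; done.
- have eu1 : u1 = u2*v1/v2 by rewrite -hu12 mulfK.
  have eu3 : u3 = u2*v3/v2 by rewrite hu23 mulfK.
  have ew1 : w1 = w2*v1/v2 by rewrite -hw12 mulfK.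
  have ew3 : w3 = w2*v3/v2 by rewrite hw23 mulfK.
  rewrite eu1 eu3 ew1 ew3; split; field; done.
- have eu1 : u1 = u3*v1/v3 by rewrite -hu13 mulfK.
  have eu2 : u2 = u3*v2/v3 by rewrite -hu23 mulfK.
  have ew1 : w1 = w3*v1/v3 by rewrite -hw13 mulfK.
  have ew2 : w2 = w3*v2/v3 by rewrite -hw23 mulfK.
  rewrite eu1 eu2 ew1 ew2; split; field; done.
Qed.
Lemma cent_eqs (R : fieldType) (M P : 'M[R]_2) : P * M = M * P ->
  [/\ (P 0 0 - P 1 1) * M 0 1 = P 0 1 * (M 0 0 - M 1 1),
      (P 0 0 - P 1 1) * M 1 0 = P 1 0 * (M 0 0 - M 1 1) &
      P 0 1 * M 1 0 = P 1 0 * M 0 1].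
Proof.
move=> h.
have e00 : (P*M) 0 0 = (M*P) 0 0 by rewrite h.
have e01 : (P*M) 0 1 = (M*P) 0 1 by rewrite h.
have e10 : (P*M) 1 0 = (M*P) 1 0 by rewrite h.
rewrite !mul2E in e00 e01 e10.
split; [lin e01 | lin e10 | lin e00].
Qed.
Lemma cent2 (R : fieldType) (M P Q : 'M[R]_2) :
  [|| M 0 0 - M 1 1 != 0, M 0 1 != 0 | M 1 0 != 0] ->
  P * M = M * P -> Q * M = M * Q -> P * Q = Q * P.
Proof.
move=> hv /cent_eqs [h1 h2 h3] /cent_eqs [g1 g2 g3].
have [k1 k2 k3] := par hv h1 h2 h3 g1 g2 g3.
apply: mx2P; rewrite !mul2E; [lin k3 | lin k1 | lin k2 | lin k3].
Qed.
Lemma det2 (F : comRingType) (M : 'M[F]_2) : \det M = M 0 0 * M 1 1 - M 0 1 * M 1 0.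
Proof.
rewrite (expand_det_row _ 0) !big_ord_recr big_ord0 /= add0r /cofactor !det_mx11 !mxE.
have -> : widen_ord (leqnSn 1) ord_max = 0 :> 'I_2 by apply/val_inj.
have -> : ord_max = 1 :> 'I_2 by apply/val_inj.
try have -> : lift 0 0 = 1 :> 'I_2 by apply/val_inj.
try have -> : lift 1 0 = 0 :> 'I_2 by apply/val_inj.
by rewrite /= expr0 expr1 mul1r mulN1r mulrN.
Qed.
Lemma invol2 (R: fieldType) (Y : 'M[R]_2) : (2:R) != 0 -> \det Y = 1 -> Y * Y = 1 -> Y = (Y 0 0)%:M.
Proof.
move=> h2; rewrite det2 => hd hY.
have e00 : (Y*Y) 0 0 = (1 : 'M[R]_2) 0 0 by rewrite hY.
have e01 : (Y*Y) 0 1 = (1 : 'M[R]_2) 0 1 by rewrite hY.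
have e10 : (Y*Y) 1 0 = (1 : 'M[R]_2) 1 0 by rewrite hY.
rewrite !mul2E !mxE /= in e00 e01 e10.
set a := Y 0 0 in e00 e01 e10 hd *; set b := Y 0 1 in e00 e01 e10 hd *.
set c := Y 1 0 in e00 e01 e10 hd *; set d := Y 1 1 in e00 e01 e10 hd *.
have ha : a * (a + d) = 2.
  transitivity ((a*a + b*c) + (a*d - b*c)); first ring. by rewrite e00 hd.
have hs : a + d != 0 by apply: contra h2 => /eqP h; rewrite -ha h mulr0.
have ha0 : a != 0 by apply: contra h2 => /eqP h; rewrite -ha h mul0r.
have hb : b = 0.
  have : b * (a + d) = 0 by transitivity (a*b + b*d); [ring | exact: e01].
  by move/eqP; rewrite mulf_eq0 (negbTE hs) orbF => /eqP.
have hc : c = 0.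
  have : c * (a + d) = 0 by transitivity (c*a + d*c); [ring | exact: e10].
  by move/eqP; rewrite mulf_eq0 (negbTE hs) orbF => /eqP.
have hda : d = a.
  have : a * (d - a) = 0.
    transitivity ((a*d - b*c) - (a*a + b*c) + 2*b*c); first ring.
    by rewrite hd e00 hb mulr0 mul0r subrr addr0.
  by move/eqP; rewrite mulf_eq0 (negbTE ha0) /= subr_eq0 => /eqP.
apply: mx2P; rewrite !mxE /= ?mulr1n ?mulr0n //.
Qed.
Lemma comm_gen (F: fieldType) (S : seq 'M[F]_2) g :
  (forall s, s \in S -> g*s = s*g) -> forall h, generated S h -> g*h = h*g.
Proof.
move=> hS h; elim => [|x /hS //|x _ IH|x y _ IHx _ IHy].
- by rewrite mulr1 mul1r.
- exact: commrV.
- exact: commrM.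
Qed.

Lemma abelian2 (F: fieldType) (A B : 'M[F]_2) : A * B = B * A -> abelian_image [:: A; B].
Proof.
move=> hAB g h Hg Hh.
have hg : forall s, s \in [:: A; B] -> g * s = s * g.
  move=> s; rewrite !inE => /orP [] /eqP ->.
  - apply/esym; apply: (comm_gen _ Hg) => t; rewrite !inE => /orP [] /eqP -> //.
  - apply/esym; apply: (comm_gen _ Hg) => t; rewrite !inE => /orP [] /eqP -> //.
    try exact/esym.
exact: comm_gen hg _ Hh.
Qed.

Lemma unit_det1 (M : 'M[CC]_2) : \det M = 1 -> M \is a GRing.unit.
Proof. by move=> h; rewrite unitmxE h unitr1. Qed.

Theorem proposition3p4 (n : int) (hn0 : n != 0) (hn1 : n != -1)
  (A B X Y : 'M[CC]_2) :
  rep_M n A B X Y ->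
  irreducible_image [:: A; B; X; Y] ->
  abelian_image [:: A; B].
Proof.
move=> [[dA dB dX dY] [hAB hXY hmu hh]] _.
apply: abelian2.
have uA := unit_det1 dA; have uB := unit_det1 dB.
have uX := unit_det1 dX; have uY := unit_det1 dY.
have [hv|hs] := boolP [|| (A^+2) 0 0 - (A^+2) 1 1 != 0, (A^+2) 0 1 != 0 | (A^+2) 1 0 != 0].
  by apply: (cent2 hv); [rewrite -exprSr -exprS | rewrite hAB; exact: commrXz].
move: hs; rewrite !negb_or !negbK subr_eq0 => /and3P [/eqP h1 /eqP h2 /eqP h3].
have hA2 : A^+2 = ((A^+2) 0 0)%:M.
  by apply: mx2P; rewrite [in RHS]mxE /= ?mulr1n ?mulr0n ?h2 ?h3 ?h1.
set A2 := A ^+ 2 in hh h1 h2 h3 hA2 *.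
have uA2 : A2 \is a GRing.unit by rewrite unitrX.
have hX2 : X ^+ 2 = Y * A2 by rewrite hh mulVKr.
have hXY' : X * Y = Y * X.
  apply: (mulIr uA2); rewrite -mulrA -hX2 -exprS exprSr hX2 -(mulrA Y A2 X) -(mulrA Y X A2).
  by congr (_ * _); rewrite hA2 -mulmxE scalar_mxC.
have hYY : Y * Y = 1.
  have : Y = Y^-1 by rewrite -hXY -mulrA -hXY' mulrA mulVr ?mul1r.
  by move=> e; rewrite {2}e mulrV.
have h2C : (2 : CC) != 0 by rewrite pnatr_eq0.
have hYs := invol2 h2C dY hYY.
have cBY : GRing.comm B Y^-1 by apply: commrV; rewrite /GRing.comm hYs -mulmxE scalar_mxC.
have cBC : GRing.comm B (B ^ (- n)) by exact: commrXz.
have uC : B ^ (- n) \is a GRing.unit by exact: unitrXz.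
apply: (mulrI uC).
rewrite mulrA hmu -cBY -hmu mulrA cBC; exact: (esym (mulrA _ _ _)).
Qed.
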